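(* Let $\mathbf U$ be a real $3\times3$ positive-definite symmetric matrix, $|\hat{\mathbf e}|=1$, $\hat{\mathbf U}=(-\mathbf I+2\hat{\mathbf e}\otimes\hat{\mathbf e})\mathbf U(-\mathbf I+2\hat{\mathbf e}\otimes\hat{\mathbf e})$, and let $\hat{\mathbf R}\in\mathrm{SO}(3)$, nonzero $\mathbf a,\mathbf n\in\mathbb R^3$ satisfy $\hat{\mathbf R}\hat{\mathbf U}=\mathbf U+\mathbf a\otimes\mathbf n$. Suppose the cofactor conditions hold: (CC1) the middle eigenvalue of $\mathbf U$ equals $1$; (CC2) $\mathbf a\cdot\mathbf U\,\mathrm{cof}(\mathbf U^2-\mathbf I)\mathbf n=0$; (CC3) $\mathrm{tr}\,\mathbf U^2-\det\mathbf U^2-\frac{|\mathbf a|^2|\mathbf n|^2}{4}-2\ge0$. For $f\in[0,1]$ let $\mathbf C_f=(\mathbf U+f\,\mathbf n\otimes\mathbf a)(\mathbf U+f\,\mathbf a\otimes\mathbf n)$, with middle eigenvalue $1$ and other eigenvalues $\lambda_1(f)^2\le1\le\lambda_3(f)^2$ ($\lambda_1(f),\lambda_3(f)>0$), and let $\mathbf v_1(f),\mathbf v_3(f)$ be orthonormal eigenvectors of $\mathbf C_f$ for $\lambda_1(f)^2,\lambda_3(f)^2$. Then for each $f\in[0,1]$ with $f\neq1/2$ there are two distinct solutions $(\mathbf R_f^\kappa\in\mathrm{SO}(3),\ \mathbf b_f^\kappa\otimes\mathbf m_f^\kappa)$, $\kappa\in\{\pm1\}$, of $$\mathbf R\big[f(\mathbf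 U+\mathbf a\otimes\mathbf n)+(1-f)\mathbf U\big]-\mathbf I=\mathbf b\otimes\mathbf m,$$ and these are given by $$\mathbf b_f^\kappa=\frac{\rho}{\sqrt{\lambda_3(f)^2-\lambda_1(f)^2}}\Big(\lambda_3(f)\sqrt{1-\lambda_1(f)^2}\,\mathbf v_1(f)+\kappa\,\lambda_1(f)\sqrt{\lambda_3(f)^2-1}\,\mathbf v_3(f)\Big),$$ $$\mathbf m_f^\kappa=\frac1\rho\,\frac{\lambda_3(f)-\lambda_1(f)}{\sqrt{\lambda_3(f)^2-\lambda_1(f)^2}}\Big(-\sqrt{1-\lambda_1(f)^2}\,\mathbf v_1(f)+\kappa\sqrt{\lambda_3(f)^2-1}\,\mathbf v_3(f)\Big),$$ for $\kappa\in\{\pm1\}$ and some $\rho\neq0$ (which does not affect $\mathbf b_f^\kappa\otimes\mathbf m_f^\kappa$).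
   Context: $\mathbf a\otimes\mathbf n$ is the matrix $\mathbf x\mapsto(\mathbf n\cdot\mathbf x)\mathbf a$; $\mathrm{cof}\,\mathbf A$ is the cofactor matrix of $\mathbf A$. Solutions are distinguished by the pair $(\mathbf R,\mathbf b\otimes\mathbf m)$. *)

(* Defs.v *)
From mathcomp Require Import all_boot all_order all_algebra.
From mathcomp Require Import reals.
Set Implicit Arguments. Unset Strict Implicit. Unset Printing Implicit Defensive.
Import Order.TTheory GRing.Theory Num.Theory.
Local Open Scope ring_scope.

Section Defs.
Variable R : realType.

(* a (x) n : the matrix x |-> (n . x) a, i.e. a n^T *)
Definition tens (a n : 'cV[R]_3) : 'M[R]_3 := a *m n^T.
Definition dotv (a b : 'cV[R]_3) : R := (a^T *m b) 0 0.
(* cofactor matrix: (cof A) i j = cofactor i j A *)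
Definition cofm (A : 'M[R]_3) : 'M[R]_3 := (\adj A)^T.
Definition SO3 (Q : 'M[R]_3) : Prop := Q^T *m Q = 1%:M /\ \det Q = 1.
Definition sym_posdef (U : 'M[R]_3) : Prop :=
  U^T = U /\ forall x : 'cV[R]_3, x != 0 -> 0 < dotv x (U *m x).
(* the middle eigenvalue of the (symmetric) matrix A equals 1:
   its eigenvalues, listed with multiplicity, are mu1 <= 1 <= mu3 *)
Definition middle_eig_one (A : 'M[R]_3) : Prop :=
  exists mu1 mu3 : R, mu1 <= 1 <= mu3 /\
    char_poly A = ('X - mu1%:P) * ('X - 1) * ('X - mu3%:P).
Definition is_sol (F Q M : 'M[R]_3) : Prop :=
  SO3 Q /\ (exists b m : 'cV[R]_3, M = tens b m) /\ Q *m F - 1%:M = M.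

Definition Cf (U : 'M[R]_3) (a n : 'cV[R]_3) (f : R) : 'M[R]_3 :=
  (U + f *: tens n a) *m (U + f *: tens a n).

Definition bvec (rho l1 l3 kappa : R) (v1 v3 : 'cV[R]_3) : 'cV[R]_3 :=
  (rho / Num.sqrt (l3 ^+ 2 - l1 ^+ 2)) *:
    ((l3 * Num.sqrt (1 - l1 ^+ 2)) *: v1 + (kappa * l1 * Num.sqrt (l3 ^+ 2 - 1)) *: v3).
Definition mvec (rho l1 l3 kappa : R) (v1 v3 : 'cV[R]_3) : 'cV[R]_3 :=
  (rho^-1 * ((l3 - l1) / Num.sqrt (l3 ^+ 2 - l1 ^+ 2))) *:
    ((- Num.sqrt (1 - l1 ^+ 2)) *: v1 + (kappa * Num.sqrt (l3 ^+ 2 - 1)) *: v3).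
End Defs.

(* Main.v *)
Require Import Defs.
From mathcomp Require Import all_boot all_order all_algebra.
From mathcomp Require Import reals.
From mathcomp Require Import ring lra.
Import Order.TTheory GRing.Theory Num.Theory.
Local Open Scope ring_scope.
Set Implicit Arguments. Unset Strict Implicit.


Notation i0 := (@Ordinal 3 0 isT).
Notation i1 := (@Ordinal 3 1 isT).
Notation i2 := (@Ordinal 3 2 isT).

Ltac nrm A :=
  let g := fresh "g" in let H := fresh "H" in
  set g := (fun m k : nat => A (inord m) (inord k));
  assert (H : forall i j, A i j = g i j) by (let i := fresh in let j := fresh in move=> i j; rewrite /g !inord_val; reflexivity);
  rewrite ?H /=; clear H.

Ltac crunch := rewrite ?(mxE, big_ord_recr, big_ord0) /=.
Section Gen.
Variable T : comNzRingType.
Lemma det3 (A : 'M[T]_3) : \det A =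
  A i0 i0 * (A i1 i1 * A i2 i2 - A i1 i2 * A i2 i1)
  - A i0 i1 * (A i1 i0 * A i2 i2 - A i1 i2 * A i2 i0)
  + A i0 i2 * (A i1 i0 * A i2 i1 - A i1 i1 * A i2 i0).
Proof.
rewrite (expand_det_row _ i0) !big_ord_recr big_ord0 /= add0r.
rewrite /cofactor.
rewrite !(expand_det_row _ ord0) !big_ord_recr !big_ord0 /= !add0r.
rewrite /cofactor !det_mx11 !mxE. nrm A.
ring.
Qed.
End Gen.

Section S.
Variable R : realType.
Definition s2 (A : 'M[R]_3) := A i0 i0 * A i1 i1 - A i0 i1 * A i1 i0
  + A i0 i0 * A i2 i2 - A i0 i2 * A i2 i0 + A i1 i1 * A i2 i2 - A i1 i2 * A i2 i1.
Lemma tr3 (A : 'M[R]_3) : \tr A = A i0 i0 + A i1 i1 + A i2 i2.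
Proof. rewrite /mxtrace !big_ord_recr big_ord0 /=. nrm A. ring. Qed.

Lemma charp3 (A : 'M[R]_3) : char_poly A =
  'X^3 - (\tr A)%:P * 'X^2 + (s2 A)%:P * 'X - (\det A)%:P.
Proof.
rewrite /char_poly det3 tr3 det3 /s2 /char_poly_mx !mxE -!val_eqE /=.
nrm A.
rewrite !(polyCD, polyCM, polyCN, polyCB).
ring.
Qed.

Lemma det1m (A : 'M[R]_3) : \det (1%:M - A) = 1 - \tr A + s2 A - \det A.
Proof.
rewrite !det3 tr3 /s2 !mxE -!val_eqE /=. nrm A. ring.
Qed.

Lemma dotvE (a b : 'cV[R]_3) :
  dotv a b = a i0 0 * b i0 0 + a i1 0 * b i1 0 + a i2 0 * b i2 0.
Proof. rewrite /dotv; crunch; nrm a; nrm b; ring. Qed.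

Lemma tensE (a b : 'cV[R]_3) i j : tens a b i j = a i 0 * b j 0.
Proof. rewrite /tens; crunch; rewrite add0r. nrm a. nrm b. by []. Qed.

Lemma tens_mul (a b c d : 'cV[R]_3) :
  tens a b *m tens c d = dotv b c *: tens a d.
Proof.
apply/matrixP => i j; rewrite dotvE /tens; crunch.
nrm a; nrm b; nrm c; nrm d; ring.
Qed.

Lemma tens_tr (a b : 'cV[R]_3) : (tens a b)^T = tens b a.
Proof. by rewrite /tens trmx_mul trmxK. Qed.

Lemma mul_tens (A : 'M[R]_3) (a b : 'cV[R]_3) : A *m tens a b = tens (A *m a) b.
Proof. by rewrite /tens mulmxA. Qed.

Lemma tens_mulr (A : 'M[R]_3) (a b : 'cV[R]_3) : tens a b *m A = tens a (A^T *m b).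
Proof. by rewrite /tens -mulmxA trmx_mul trmxK. Qed.

Lemma dotv_tr (x y : 'cV[R]_3) (M : 'M[R]_3) : dotv x (M *m y) = dotv y (M^T *m x).
Proof.
rewrite !dotvE; crunch; nrm x; nrm y; nrm M; ring.
Qed.

Lemma dotvC (x y : 'cV[R]_3) : dotv x y = dotv y x.
Proof. rewrite !dotvE; ring. Qed.

Lemma det_rank1 (A : 'M[R]_3) (a b : 'cV[R]_3) (f : R) :
  \det (A + f *: tens a b) = \det A + f * dotv b (\adj A *m a).
Proof.
rewrite !det3 dotvE; crunch; rewrite /cofactor.
rewrite !(expand_det_row _ ord0) !big_ord_recr !big_ord0 /= !add0r.
rewrite /cofactor !det_mx11 /tens; crunch.
nrm A; nrm a; nrm b; ring.
Qed.

Lemma det_quad (G : 'M[R]_3) (n p : 'cV[R]_3) (c f : R) :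
  let L := dotv p (\adj G *m n) + dotv n (\adj G *m p) in
  \det (G + f *: (tens n p + tens p n) + (f^+2 * c) *: tens n n) =
  \det G + f * L + f^+2 * (\det (G + (tens n p + tens p n) + c *: tens n n) - \det G - L).
Proof.
move=> L; rewrite /L !det3 !dotvE; crunch; rewrite /cofactor.
rewrite !(expand_det_row _ ord0) !big_ord_recr !big_ord0 /= !add0r.
rewrite /cofactor !det_mx11 /tens; crunch.
nrm G; nrm n; nrm p; ring.
Qed.

Lemma trCf (U : 'M[R]_3) a n f : \tr (Cf U a n f) = \tr (U *m U)
   + f * (dotv n (U *m a) + dotv a (U *m n)) + f^+2 * (dotv a a * dotv n n).
Proof.
rewrite /Cf !tr3 !dotvE /tens; crunch. nrm U; nrm a; nrm n; ring.
Qed.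

Lemma Cf_sub1 (U : 'M[R]_3) a n f : U^T = U ->
  Cf U a n f - 1%:M = (U *m U - 1%:M) + f *: (tens n (U *m a) + tens (U *m a) n)
     + (f^+2 * dotv a a) *: tens n n.
Proof.
move=> HU; rewrite /Cf mulmxDl !mulmxDr -!scalemxAl -!scalemxAr mul_tens tens_mulr tens_mul HU.
apply/matrixP => i j; rewrite !dotvE /tens; crunch. nrm U; nrm a; nrm n; ring.
Qed.

Lemma Cf_tr (U : 'M[R]_3) a n f : U^T = U -> (Cf U a n f)^T = Cf U a n f.
Proof.
move=> HU; rewrite /Cf trmx_mul !linearD /= !linearZ /= !tens_tr HU //.
Qed.

Lemma Qsq (e : 'cV[R]_3) : dotv e e = 1 ->
  (- 1%:M + 2%:R *: tens e e) *m (- 1%:M + 2%:R *: tens e e) = 1%:M.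
Proof.
move=> He; rewrite mulmxDl !mulmxDr -!scalemxAl -!scalemxAr tens_mul He.
rewrite !mulNmx !mulmxN !mul1mx !mulmx1 opprK.
apply/matrixP => i j; rewrite /tens; crunch. nrm e. ring.
Qed.

Lemma Qtr (e : 'cV[R]_3) : (- 1%:M + 2%:R *: tens e e)^T = - 1%:M + 2%:R *: tens e e.
Proof. by rewrite linearD /= linearN /= trmx1 linearZ /= tens_tr. Qed.
End S.



Section CU.
Variable R : realFieldType.

Lemma CUs (l1 l3 r1 r3 b0 b1 b2 m0 m1 m2 : R) :
  0 < l1 -> l1 < 1 -> 1 < l3 -> 0 < r1 -> 0 < r3 ->
  r1^+2 = 1 - l1^+2 -> r3^+2 = l3^+2 - 1 ->
  1 + 2 * m0 * b0 + (b0^+2 + b1^+2 + b2^+2) * m0^+2 = l1^+2 ->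
  1 + 2 * m1 * b1 + (b0^+2 + b1^+2 + b2^+2) * m1^+2 = 1 ->
  1 + 2 * m2 * b2 + (b0^+2 + b1^+2 + b2^+2) * m2^+2 = l3^+2 ->
  m0 * b1 + b0 * m1 + (b0^+2 + b1^+2 + b2^+2) * m0 * m1 = 0 ->
  m0 * b2 + b0 * m2 + (b0^+2 + b1^+2 + b2^+2) * m0 * m2 = 0 ->
  0 < 1 + (b0 * m0 + b1 * m1 + b2 * m2) ->
  (1 + (b0 * m0 + b1 * m1 + b2 * m2))^+2 = (l1  *  l3)^+2 ->
  let k := (l1 + l3)^-1 in
  exists kap : R, (kap = 1 \/ kap = -1) /\
    b0 * m0 = - (k  *  l3  *  r1^+2) /\ b0 * m1 = 0 /\ b0 * m2 = kap  *  k  *  l3  *  r1  *  r3 /\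
    b1 * m0 = 0 /\ b1 * m1 = 0 /\ b1 * m2 = 0 /\
    b2 * m0 = - (kap  *  k  *  l1  *  r1  *  r3) /\ b2 * m1 = 0 /\ b2 * m2 = k  *  l1  *  r3^+2.
Proof.
move=> l1p l1l l3g r1p r3p Hr1 Hr3.
set B := b0^+2 + b1^+2 + b2^+2.
move=> E00 E11 E22 E01 E02 Hpos Hsq k.
have l3p : 0 < l3 by lra.
have Ht : 1 + (b0 * m0 + b1 * m1 + b2 * m2) = l1  *  l3.
  have : (1 + (b0 * m0 + b1 * m1 + b2 * m2) - l1 * l3)  *  (1 + (b0 * m0 + b1 * m1 + b2 * m2) + l1 * l3) = 0.
    by rewrite -subr_sqr Hsq subrr.
  move/eqP; rewrite mulf_eq0 => /orP [/eqP H|/eqP H].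
    by apply/eqP; rewrite -subr_eq0 H.
  have : 0 < l1  *  l3 by apply: mulr_gt0.
  lra.
have x1 : l1^+2 < 1 by nra.
have y1 : 1 < l3^+2 by nra.
have m0n : m0 != 0.
  apply/eqP => h; move: E00; rewrite h; lra.
have m1z : m1 = 0.
  have [//|m1n] := eqVneq m1 0; exfalso.
  have H1 : m1  *  (2 * b1 + B * m1) = 0 by rewrite -[RHS](subrr 1); rewrite -{2}E11; ring.
  move/eqP: H1; rewrite mulf_eq0 (negbTE m1n) /= => /eqP H1.
  have H2 : m1  *  (2 * b0 + B * m0) = 0.
    have -> : m1  *  (2 * b0 + B * m0) = 2  *  (m0 * b1 + b0 * m1 + B * m0 * m1) - m0  *  (2 * b1 + B * m1) by ring.
    by rewrite E01 H1; ring.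
  move/eqP: H2; rewrite mulf_eq0 (negbTE m1n) /= => /eqP H2.
  have : 1 + m0  *  (2 * b0 + B * m0) = l1^+2 by rewrite -E00; ring.
  rewrite H2; lra.
have b1z : b1 = 0.
  move: E01; rewrite m1z => /eqP; rewrite !mulr0 !addr0 mulf_eq0 (negbTE m0n) /=.
  by move/eqP.
have Ht2 : b0 * m0 + b2 * m2 = l1 * l3 - 1 by move: Ht; rewrite b1z m1z; lra.
have Htr : B * (m0^+2 + m2^+2) = (l3 - l1)^+2.
  have e1 : B * m0^+2 = l1^+2 - 1 - 2 * m0 * b0 by rewrite -E00; ring.
  have e2 : B * m2^+2 = l3^+2 - 1 - 2 * m2 * b2 by rewrite -E22; ring.
  rewrite mulrDr e1 e2.
  have -> : l1 ^+ 2 - 1 - 2 * m0 * b0 + (l3 ^+ 2 - 1 - 2 * m2 * b2) =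
    l1^+2 + l3^+2 - 2 - 2 * (b0 * m0 + b2 * m2) by ring.
  rewrite Ht2; ring.
have r1n : r1 != 0 by rewrite gt_eqF.
have r3n : r3 != 0 by rewrite gt_eqF.
have Hq : r3^+2 * m0^+2 = r1^+2 * m2^+2.
  have e1 : 1 - l1^+2 = - (2 * m0 * b0 + B * m0^+2) by rewrite -E00; ring.
  have e2 : l3^+2 - 1 = 2 * m2 * b2 + B * m2^+2 by rewrite -E22; ring.
  rewrite Hr3 Hr1 e1 e2.
  apply/eqP; rewrite -subr_eq0.
  have -> : (2 * m2 * b2 + B * m2 ^+ 2) * m0 ^+ 2 - - (2 * m0 * b0 + B * m0 ^+ 2) * m2 ^+ 2
    = 2 * m0 * m2 * (m0 * b2 + b0 * m2 + B * m0 * m2) by ring.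
  by rewrite E02 mulr0.
set s := - m0 / r1.
have Hm0 : m0 = - s * r1 by rewrite /s; field.
have sn : s != 0.
  apply/eqP => h; move: m0n; rewrite Hm0 h; by rewrite oppr0 mul0r eqxx.
have Hm2sq : m2^+2 = (s * r3)^+2.
  have r1sq : r1^+2 != 0 by rewrite expf_neq0.
  apply: (mulfI r1sq); rewrite -Hq Hm0; ring.
have [kap [Hk Hm2]] : exists kap : R, (kap = 1 \/ kap = -1) /\ m2 = kap * s * r3.
  have : (m2 - s * r3) * (m2 + s * r3) = 0 by rewrite -subr_sqr Hm2sq subrr.
  move/eqP; rewrite mulf_eq0 => /orP [/eqP H|/eqP H].
    exists 1; split; first by left.
    by apply/eqP; rewrite -subr_eq0 mul1r H.
  exists (-1); split; first by right.
  have -> : m2 = (m2 + s * r3) - s * r3 by ring.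
  rewrite H; ring.
have kap2 : kap^+2 = 1 by case: Hk => ->; ring.
set W := B * s^+2.
have l31 : l3 - l1 != 0 by rewrite subr_eq0 gt_eqF //; lra.
have l13 : l1 + l3 != 0 by rewrite gt_eqF //; lra.
have HW : W = (l3 - l1) / (l1 + l3).
  have H : (l3 - l1) * (W * (l1 + l3)) = (l3 - l1) * (l3 - l1).
    rewrite -expr2 -Htr Hm0 Hm2 /W.
    have -> : (l3 - l1) * (B * s ^+ 2 * (l1 + l3)) = B * s^+2 * (l3^+2 - l1^+2) by ring.
    have -> : l3^+2 - l1^+2 = r1^+2 + r3^+2 by rewrite Hr1 Hr3; ring.
    ring: kap2.
  have := mulfI l31 H => H'.
  by rewrite -H'; field.
have H0 : r1 * (r1 - 2 * s * b0 + W * r1) = 0.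
  have -> : r1 * (r1 - 2 * s * b0 + W * r1) = r1^+2 + (2 * m0 * b0 + B * m0^+2).
    by rewrite Hm0 /W; ring.
  rewrite Hr1; lra.
have H2 : r3 * (2 * kap * s * b2 + W * r3 - r3) = 0.
  have -> : r3 * (2 * kap * s * b2 + W * r3 - r3) = - r3^+2 + (2 * m2 * b2 + B * m2^+2).
    by rewrite Hm2 /W; ring: kap2.
  rewrite Hr3; lra.
move/eqP: H0; rewrite mulf_eq0 (negbTE r1n) /= => /eqP H0.
move/eqP: H2; rewrite mulf_eq0 (negbTE r3n) /= => /eqP H2.
have Hsb0 : s * b0 = (1 + W) * r1 / 2.
  apply/eqP; rewrite -subr_eq0; apply/eqP; rewrite -[RHS](mulr0 (- 2^-1 : R)) -H0; field; try done.
have Hsb2 : s * b2 = kap * (1 - W) * r3 / 2.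
  apply/eqP; rewrite -subr_eq0; apply/eqP; rewrite -[RHS](mulr0 (kap / 2 : R)) -H2.
  field: kap2; try done.
exists kap; split => //.
rewrite b1z m1z !mulr0 !mul0r.
do !split => //.
- have -> : b0 * m0 = - (s * b0) * r1 by rewrite Hm0; ring.
  rewrite Hsb0 HW /k; field; try done.
- have -> : b0 * m2 = kap * (s * b0) * r3 by rewrite Hm2; ring.
  rewrite Hsb0 HW /k; field; try done.
- have -> : b2 * m0 = - (s * b2) * r1 by rewrite Hm0; ring.
  rewrite Hsb2 HW /k; field; try done.
- have -> : b2 * m2 = kap * (s * b2) * r3 by rewrite Hm2; ring.
  rewrite Hsb2 HW /k; field: kap2; try done.
Qed.
End CU.




Arguments s2 {R}.
Section M1.
Variable R : realType.

Definition Dg (x m y : R) : 'M[R]_3 := \matrix_(i, j)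
  if val i == val j then (match val i with 0 => x | 1 => m | _ => y end) else 0.
Definition D3 (x y : R) := Dg x 1 y.
Definition Nk (l1 l3 r1 r3 kap : R) : 'M[R]_3 := \matrix_(i, j)
  match val i, val j with
  | 0, 0 => - ((l1 + l3)^-1 * l3 * r1^+2)
  | 0, 2 => kap * (l1 + l3)^-1 * l3 * r1 * r3
  | 2, 0 => - (kap * (l1 + l3)^-1 * l1 * r1 * r3)
  | 2, 2 => (l1 + l3)^-1 * l1 * r3^+2
  | _, _ => 0 end.

Lemma CE (l1 l3 r1 r3 kap : R) : 0 < l1 -> 0 < l3 ->
  r1^+2 = 1 - l1^+2 -> r3^+2 = l3^+2 - 1 -> kap^+2 = 1 ->
  (1%:M + Nk l1 l3 r1 r3 kap)^T *m (1%:M + Nk l1 l3 r1 r3 kap) = D3 (l1^+2) (l3^+2).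
Proof.
move=> l1p l3p Hr1 Hr3 Hk.
have l13 : l1 + l3 != 0 by rewrite gt_eqF //; lra.
apply/matrixP => i j; rewrite /D3 /Dg.
case: i => [[|[|[|i]]] Hi] //=; case: j => [[|[|[|j]]] Hj] //=; crunch.
all: field: Hr1 Hr3 Hk; try done.
Qed.

Lemma poly3_inj (t s d t' s' d' : R) :
  'X^3 - t%:P * 'X^2 + s%:P * 'X - d%:P = 'X^3 - t'%:P * 'X^2 + s'%:P * 'X - d'%:P ->
  [/\ t = t', s = s' & d = d'].
Proof.
move=> H.
have H2 := congr1 (fun p : {poly R} => p`_2) H.
have H1 := congr1 (fun p : {poly R} => p`_1) H.
have H0 := congr1 (fun p : {poly R} => p`_0) H.
move: H2 H1 H0; rewrite !coefE /= => H2 H1 H0.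
split; lra.
Qed.

Lemma prod3E (x y : R) : ('X - x%:P) * ('X - 1) * ('X - y%:P) =
  'X^3 - (x + 1 + y)%:P * 'X^2 + (x + y + x * y)%:P * 'X - (x * y)%:P :> {poly R}.
Proof. rewrite !(polyCD, polyCM, polyC1); ring. Qed.

Lemma charC (A : 'M[R]_3) x y : char_poly A = ('X - x%:P) * ('X - 1) * ('X - y%:P) ->
  [/\ \tr A = x + 1 + y, s2 A = x + y + x * y & \det A = x * y].
Proof. by rewrite charp3 prod3E => /poly3_inj. Qed.

Lemma charC_back (A : 'M[R]_3) x y : \tr A = x + 1 + y -> s2 A = x + y + x * y ->
  \det A = x * y -> char_poly A = ('X - x%:P) * ('X - 1) * ('X - y%:P).
Proof. by rewrite charp3 prod3E => -> -> ->. Qed.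

Lemma detN3 (A : 'M[R]_3) : \det (- A) = - \det A.
Proof. rewrite !det3; crunch; ring. Qed.

Lemma dotv_ge0 (a : 'cV[R]_3) : 0 <= dotv a a.
Proof. rewrite dotvE; nra. Qed.

Lemma dotv_gt0 (a : 'cV[R]_3) : a != 0 -> 0 < dotv a a.
Proof.
move=> an; rewrite lt_neqAle dotv_ge0 andbT; apply/eqP => H.
move/eqP: an; apply; apply/matrixP => i j; rewrite (ord1 j) mxE.
move: H; rewrite dotvE => H.
have h0 : a i0 0 = 0 by nra.
have h1 : a i1 0 = 0 by nra.
have h2 : a i2 0 = 0 by nra.
by case: i => [[|[|[|i]]] Hi] //=; [rewrite -h0 | rewrite -h1 | rewrite -h2]; congr (a _ _); apply/val_inj.
Qed.

Lemma posdef_eig (U : 'M[R]_3) mu : sym_posdef U -> root (char_poly U) mu -> 0 < mu.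
Proof.
case=> HUt HUp; rewrite -eigenvalue_root_char => /eigenvalueP [v Hv vn].
set w := v^T.
have wn : w != 0 by apply: contraNneq vn => h; rewrite -(trmxK v) -/w h trmx0.
have Hw : U *m w = mu *: w by rewrite /w -{1}HUt -trmx_mul Hv linearZ.
have := HUp w wn; rewrite Hw.
have -> : dotv w (mu *: w) = mu * dotv w w by rewrite !dotvE; crunch; ring.
have := dotv_ge0 w; nra.
Qed.

Definition cross (u v : 'cV[R]_3) : 'cV[R]_3 := \col_i
  match val i with
  | 0 => u i1 0 * v i2 0 - u i2 0 * v i1 0
  | 1 => u i2 0 * v i0 0 - u i0 0 * v i2 0
  | _ => u i0 0 * v i1 0 - u i1 0 * v i0 0 end.
Definition vv (v1 v3 : 'cV[R]_3) k := match k with 0 => v1 | 1 => cross v1 v3 | _ => v3 end.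
Definition Pm (v1 v3 : 'cV[R]_3) : 'M[R]_3 := \matrix_(i, j) vv v1 v3 (val j) i 0.

Lemma PAP_entry v1 v3 (A : 'M[R]_3) i j :
  ((Pm v1 v3)^T *m A *m Pm v1 v3) i j = dotv (vv v1 v3 (val i)) (A *m vv v1 v3 (val j)).
Proof.
case: i => [[|[|[|i]]] Hi] //=; case: j => [[|[|[|j]]] Hj] //=;
rewrite dotvE /cross; crunch; nrm v1; nrm v3; nrm A; ring.
Qed.

Lemma dotvZ (u w : 'cV[R]_3) c : dotv u (c *: w) = c * dotv u w.
Proof. rewrite !dotvE; crunch; ring. Qed.

Lemma dot_cross1 (v1 v3 : 'cV[R]_3) : dotv v1 (cross v1 v3) = 0.
Proof. rewrite dotvE /cross; crunch; ring. Qed.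
Lemma dot_cross3 (v1 v3 : 'cV[R]_3) : dotv v3 (cross v1 v3) = 0.
Proof. rewrite dotvE /cross; crunch; ring. Qed.
Lemma dot_cross2 (v1 v3 : 'cV[R]_3) :
  dotv (cross v1 v3) (cross v1 v3) = dotv v1 v1 * dotv v3 v3 - dotv v1 v3 ^+ 2.
Proof. rewrite !dotvE /cross; crunch; ring. Qed.

Lemma PtP (v1 v3 : 'cV[R]_3) : dotv v1 v1 = 1 -> dotv v3 v3 = 1 -> dotv v1 v3 = 0 ->
  (Pm v1 v3)^T *m Pm v1 v3 = 1%:M.
Proof.
move=> H1 H3 H13.
have H31 : dotv v3 v1 = 0 by rewrite dotvC.
apply/matrixP => i j; rewrite -[(Pm v1 v3)^T](mulmx1) PAP_entry mul1mx.
case: i => [[|[|[|i]]] Hi] //=; case: j => [[|[|[|j]]] Hj] //=; rewrite mxE /=;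
rewrite ?H1 ?H3 ?H13 ?H31 ?dot_cross1 ?dot_cross3 ?dot_cross2 ?H1 ?H3 ?H13 //;
try (rewrite dotvC ?dot_cross1 ?dot_cross3 //).
by rewrite expr2 mulr0 subr0 mulr1.
Qed.

Lemma PPt (v1 v3 : 'cV[R]_3) : dotv v1 v1 = 1 -> dotv v3 v3 = 1 -> dotv v1 v3 = 0 ->
  Pm v1 v3 *m (Pm v1 v3)^T = 1%:M.
Proof. by move=> H1 H3 H13; apply: mulmx1C; apply: PtP. Qed.

Lemma detDg x m y : \det (Dg x m y) = x * m * y.
Proof. rewrite det3 /Dg; crunch; ring. Qed.

Lemma PCP (v1 v3 : 'cV[R]_3) (C : 'M[R]_3) x y : C^T = C ->
  dotv v1 v1 = 1 -> dotv v3 v3 = 1 -> dotv v1 v3 = 0 ->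
  C *m v1 = x *: v1 -> C *m v3 = y *: v3 -> \det C = x * y -> x * y != 0 ->
  (Pm v1 v3)^T *m C *m Pm v1 v3 = D3 x y.
Proof.
move=> HC H1 H3 H13 Hv1 Hv3 Hdet Hxy.
have H31 : dotv v3 v1 = 0 by rewrite dotvC.
set mu := dotv (cross v1 v3) (C *m cross v1 v3).
have HD : (Pm v1 v3)^T *m C *m Pm v1 v3 = Dg x mu y.
  apply/matrixP => i j; rewrite PAP_entry.
  case: i => [[|[|[|i]]] Hi] //=; case: j => [[|[|[|j]]] Hj] //=; rewrite mxE /=;
  rewrite ?Hv1 ?Hv3 ?dotvZ ?H1 ?H3 ?H13 ?H31 ?mulr0 ?mulr1 //.
  - by rewrite dotv_tr HC Hv1 dotvZ dotvC dot_cross1 mulr0.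
  - by rewrite dotvC dot_cross1 mulr0.
  - by rewrite dotvC dot_cross3 mulr0.
  - by rewrite dotv_tr HC Hv3 dotvZ dotvC dot_cross3 mulr0.
have Hdet' : \det ((Pm v1 v3)^T *m C *m Pm v1 v3) = \det C.
  rewrite !det_mulmx mulrC mulrA -det_mulmx mulrC.
  by rewrite PPt // det1 mulr1.
move: Hdet'; rewrite HD detDg Hdet => Hmu.
have mu1 : mu = 1.
  apply: (mulfI Hxy); rewrite mulr1 -[RHS]Hmu; ring.
by rewrite /D3 -mu1.
Qed.

Definition cbv (rho l1 l3 kap : R) : 'cV[R]_3 := \col_i
  match val i with
  | 0 => rho / Num.sqrt (l3 ^+ 2 - l1 ^+ 2) * (l3 * Num.sqrt (1 - l1 ^+ 2))
  | 1 => 0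
  | _ => rho / Num.sqrt (l3 ^+ 2 - l1 ^+ 2) * (kap * l1 * Num.sqrt (l3 ^+ 2 - 1)) end.
Definition cmv (rho l1 l3 kap : R) : 'cV[R]_3 := \col_i
  match val i with
  | 0 => (rho^-1 * ((l3 - l1) / Num.sqrt (l3 ^+ 2 - l1 ^+ 2))) * (- Num.sqrt (1 - l1 ^+ 2))
  | 1 => 0
  | _ => (rho^-1 * ((l3 - l1) / Num.sqrt (l3 ^+ 2 - l1 ^+ 2))) * (kap * Num.sqrt (l3 ^+ 2 - 1)) end.

Lemma bvecP rho l1 l3 kap v1 v3 : bvec rho l1 l3 kap v1 v3 = Pm v1 v3 *m cbv rho l1 l3 kap.
Proof.
apply/matrixP => i j; rewrite (ord1 j) /bvec /cbv /Pm; crunch; rewrite /vv.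
nrm v1; nrm v3; ring.
Qed.

Lemma mvecP rho l1 l3 kap v1 v3 : mvec rho l1 l3 kap v1 v3 = Pm v1 v3 *m cmv rho l1 l3 kap.
Proof.
apply/matrixP => i j; rewrite (ord1 j) /mvec /cmv /Pm; crunch; rewrite /vv.
nrm v1; nrm v3; ring.
Qed.

Lemma tensP (P : 'M[R]_3) (u w : 'cV[R]_3) : tens (P *m u) (P *m w) = P *m tens u w *m P^T.
Proof. by rewrite /tens trmx_mul !mulmxA. Qed.

Lemma cbcm rho l1 l3 kap : rho != 0 -> 0 < l1 -> l1 < l3 -> kap ^+ 2 = 1 ->
  tens (cbv rho l1 l3 kap) (cmv rho l1 l3 kap)
  = Nk l1 l3 (Num.sqrt (1 - l1 ^+ 2)) (Num.sqrt (l3 ^+ 2 - 1)) kap.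
Proof.
move=> rn l1p l13 Hk.
set s := Num.sqrt (l3 ^+ 2 - l1 ^+ 2).
have sp : 0 < s by rewrite sqrtr_gt0; nra.
have Hs : s ^+ 2 = l3 ^+ 2 - l1 ^+ 2 by rewrite sqr_sqrtr //; nra.
have sn : s != 0 by rewrite gt_eqF.
have ln : l1 + l3 != 0 by rewrite gt_eqF //; lra.
apply/matrixP => i j; rewrite tensE /cbv /cmv /Nk.
case: i => [[|[|[|i]]] Hi] //=; case: j => [[|[|[|j]]] Hj] //=; rewrite !mxE /= ?mulr0 ?mul0r //.
all: rewrite -/s; clearbody s.
- by field: Hs; rewrite ln sn rn.
- by field: Hs; rewrite ln sn rn.
- by field: Hs; rewrite ln sn rn.
- by field: Hs Hk; rewrite ln sn rn.
Qed.

Lemma ord3_cases (i : 'I_3) : i = i0 \/ i = i1 \/ i = i2.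
Proof.
case: i => [[|[|[|i]]] Hi] //=.
- by left; apply/val_inj.
- by right; left; apply/val_inj.
- by right; right; apply/val_inj.
Qed.

Lemma CEdet (l1 l3 r1 r3 kap : R) : 0 < l1 -> 0 < l3 ->
  r1^+2 = 1 - l1^+2 -> r3^+2 = l3^+2 - 1 -> kap^+2 = 1 ->
  \det (1%:M + Nk l1 l3 r1 r3 kap) = l1 * l3.
Proof.
move=> l1p l3p Hr1 Hr3 Hk.
have l13 : l1 + l3 != 0 by rewrite gt_eqF //; lra.
rewrite det3 /Nk; crunch.
by field: Hr1 Hr3 Hk; rewrite l13.
Qed.

Lemma det1tens (b m : 'cV[R]_3) : \det (1%:M + tens b m) = 1 + dotv b m.
Proof.
have := @det_rank1 R 1%:M b m 1; rewrite scale1r det1 adj1 mul1mx mul1r => ->.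
by rewrite dotvC.
Qed.

Lemma CUm (l1 l3 r1 r3 : R) (b m : 'cV[R]_3) :
  0 < l1 -> l1 < 1 -> 1 < l3 -> 0 < r1 -> 0 < r3 ->
  r1^+2 = 1 - l1^+2 -> r3^+2 = l3^+2 - 1 ->
  (1%:M + tens b m)^T *m (1%:M + tens b m) = D3 (l1^+2) (l3^+2) ->
  0 < \det (1%:M + tens b m) ->
  exists kap : R, (kap = 1 \/ kap = -1) /\ tens b m = Nk l1 l3 r1 r3 kap.
Proof.
move=> l1p l1l l3g r1p r3p Hr1 Hr3 HD Hdp.
have Hsq : (1 + dotv b m) ^+ 2 = (l1 * l3) ^+ 2.
  have := congr1 determinant HD.
  rewrite det_mulmx det_tr /D3 detDg det1tens => H; rewrite expr2 H; ring.
rewrite det1tens in Hdp.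
have E := fun i j => congr1 (fun M : 'M[R]_3 => M i j) HD.
have E00 : 1 + 2 * m i0 0 * b i0 0 + (b i0 0 ^+ 2 + b i1 0 ^+ 2 + b i2 0 ^+ 2) * m i0 0 ^+ 2 = l1 ^+ 2.
  move: (E i0 i0); rewrite /D3 /Dg /tens; crunch; nrm b; nrm m.
  by move=> H; rewrite -[RHS]H; ring.
have E11 : 1 + 2 * m i1 0 * b i1 0 + (b i0 0 ^+ 2 + b i1 0 ^+ 2 + b i2 0 ^+ 2) * m i1 0 ^+ 2 = 1.
  move: (E i1 i1); rewrite /D3 /Dg /tens; crunch; nrm b; nrm m.
  by move=> H; rewrite -[RHS]H; ring.
have E22 : 1 + 2 * m i2 0 * b i2 0 + (b i0 0 ^+ 2 + b i1 0 ^+ 2 + b i2 0 ^+ 2) * m i2 0 ^+ 2 = l3 ^+ 2.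
  move: (E i2 i2); rewrite /D3 /Dg /tens; crunch; nrm b; nrm m.
  by move=> H; rewrite -[RHS]H; ring.
have E01 : m i0 0 * b i1 0 + b i0 0 * m i1 0 + (b i0 0 ^+ 2 + b i1 0 ^+ 2 + b i2 0 ^+ 2) * m i0 0 * m i1 0 = 0.
  move: (E i0 i1); rewrite /D3 /Dg /tens; crunch; nrm b; nrm m.
  by move=> H; rewrite -[RHS]H; ring.
have E02 : m i0 0 * b i2 0 + b i0 0 * m i2 0 + (b i0 0 ^+ 2 + b i1 0 ^+ 2 + b i2 0 ^+ 2) * m i0 0 * m i2 0 = 0.
  move: (E i0 i2); rewrite /D3 /Dg /tens; crunch; nrm b; nrm m.
  by move=> H; rewrite -[RHS]H; ring.
rewrite dotvE in Hdp Hsq.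
have [kap [Hk [e00 [e01 [e02 [e10 [e11 [e12 [e20 [e21 e22]]]]]]]]]] :=
  @CUs R l1 l3 r1 r3 (b i0 0) (b i1 0) (b i2 0) (m i0 0) (m i1 0) (m i2 0)
  l1p l1l l3g r1p r3p Hr1 Hr3 E00 E11 E22 E01 E02 Hdp Hsq.
exists kap; split => //.
apply/matrixP => i j; rewrite tensE /Nk mxE.
by case: (ord3_cases i) => [->|[->|->]]; case: (ord3_cases j) => [->|[->|->]] /=;
  rewrite ?e00 ?e01 ?e02 ?e10 ?e11 ?e12 ?e20 ?e21 ?e22.
Qed.

Lemma conjP (P A : 'M[R]_3) : P^T *m P = 1%:M ->
  P^T *m ((1%:M + A)^T *m (1%:M + A)) *m P
  = (1%:M + P^T *m A *m P)^T *m (1%:M + P^T *m A *m P).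
Proof.
move=> HP.
have HPP : P *m P^T = 1%:M by apply: mulmx1C.
have -> : 1%:M + P^T *m A *m P = P^T *m (1%:M + A) *m P.
  by rewrite mulmxDr mulmxDl mulmx1 HP.
rewrite !trmx_mul trmxK.
rewrite -!mulmxA; congr (_ *m _); rewrite !mulmxA; congr (_ *m _).
by rewrite -(mulmxA _ P) HPP mulmx1.
Qed.

Lemma conj_back (P X Y : 'M[R]_3) : P^T *m P = 1%:M ->
  P^T *m X *m P = P^T *m Y *m P -> X = Y.
Proof.
move=> HP H.
have HPP : P *m P^T = 1%:M by apply: mulmx1C.
have := congr1 (fun Z => P *m Z *m P^T) H.
by rewrite !mulmxA HPP mul1mx -!mulmxA HPP !mulmx1 mul1mx.
Qed.

Lemma det_conj (P A : 'M[R]_3) : P^T *m P = 1%:M -> \det (P^T *m A *m P) = \det A.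
Proof.
move=> HP; rewrite !det_mulmx mulrC mulrA -det_mulmx.
have HPP : P *m P^T = 1%:M by apply: mulmx1C.
by rewrite HPP det1 mul1r.
Qed.

Lemma BJ (F : 'M[R]_3) (v1 v3 : 'cV[R]_3) (l1 l3 rho : R) :
  0 < \det F -> 0 < l1 -> l1 < 1 -> 1 < l3 ->
  dotv v1 v1 = 1 -> dotv v3 v3 = 1 -> dotv v1 v3 = 0 ->
  F^T *m F *m v1 = l1^+2 *: v1 -> F^T *m F *m v3 = l3^+2 *: v3 ->
  \det (F^T *m F) = l1^+2 * l3^+2 -> rho != 0 ->
  let Mp := tens (bvec rho l1 l3 1 v1 v3) (mvec rho l1 l3 1 v1 v3) in
  let Mm := tens (bvec rho l1 l3 (-1) v1 v3) (mvec rho l1 l3 (-1) v1 v3) in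
  exists Qp Qm : 'M[R]_3,
    is_sol F Qp Mp /\ is_sol F Qm Mm /\ (Qp, Mp) <> (Qm, Mm) /\
    forall Q M : 'M[R]_3, is_sol F Q M -> (Q, M) = (Qp, Mp) \/ (Q, M) = (Qm, Mm).
Proof.
move=> dFp l1p l1l l3g H1 H3 H13 Hv1 Hv3 HdC rn Mp Mm.
set C := F^T *m F.
set P := Pm v1 v3.
set r1 := Num.sqrt (1 - l1 ^+ 2).
set r3 := Num.sqrt (l3 ^+ 2 - 1).
have r1p : 0 < r1 by rewrite sqrtr_gt0; nra.
have r3p : 0 < r3 by rewrite sqrtr_gt0; nra.
have Hr1 : r1 ^+ 2 = 1 - l1 ^+ 2 by rewrite sqr_sqrtr //; nra.
have Hr3 : r3 ^+ 2 = l3 ^+ 2 - 1 by rewrite sqr_sqrtr //; nra.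
have HCt : C^T = C by rewrite /C trmx_mul trmxK.
have Hxy : l1 ^+ 2 * l3 ^+ 2 != 0 by rewrite mulf_neq0 // expf_neq0 // gt_eqF //; lra.
have HPCP : P^T *m C *m P = D3 (l1 ^+ 2) (l3 ^+ 2) := PCP HCt H1 H3 H13 Hv1 Hv3 HdC Hxy.
have HPP : P^T *m P = 1%:M := PtP H1 H3 H13.
have HPPt : P *m P^T = 1%:M := PPt H1 H3 H13.
have Fu : F \in unitmx by rewrite unitmxE unitfE gt_eqF.
have HFi : F *m invmx F = 1%:M by rewrite mulmxV.
have HiF : invmx F *m F = 1%:M by rewrite mulVmx.
have HMk : forall kap : R, kap ^+ 2 = 1 ->
    tens (bvec rho l1 l3 kap v1 v3) (mvec rho l1 l3 kap v1 v3) = P *m Nk l1 l3 r1 r3 kap *m P^T.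
  move=> kap Hk; rewrite bvecP mvecP tensP cbcm //; lra.
have Hex : forall kap : R, kap ^+ 2 = 1 ->
    is_sol F ((1%:M + P *m Nk l1 l3 r1 r3 kap *m P^T) *m invmx F) (P *m Nk l1 l3 r1 r3 kap *m P^T).
  move=> kap Hk.
  set N := Nk l1 l3 r1 r3 kap.
  set M := P *m N *m P^T.
  have HPMP : P^T *m M *m P = N by rewrite /M !mulmxA HPP mul1mx -mulmxA HPP mulmx1.
  have HMC : (1%:M + M)^T *m (1%:M + M) = C.
    apply: (conj_back HPP); rewrite conjP // HPMP HPCP CE //; lra.
  have HdM : \det (1%:M + M) = l1 * l3.
    rewrite -(det_conj _ HPP) mulmxDr mulmxDl mulmx1 HPP HPMP CEdet //; lra.
  have HdMF : \det (1%:M + M) = \det F.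
    have : \det (1%:M + M) ^+ 2 = \det F ^+ 2.
      by rewrite expr2 -{1}det_tr -det_mulmx HMC /C det_mulmx det_tr expr2.
    move/eqP; rewrite eqf_sqr => /orP [/eqP //|/eqP H].
    have : 0 < l1 * l3 by apply: mulr_gt0; lra.
    rewrite -HdM H; lra.
  split; [split|split].
  - rewrite trmx_mul mulmxA -(mulmxA _ _ (1%:M + M)) HMC /C.
    by rewrite !mulmxA -trmx_mul HFi trmx1 mul1mx HFi.
  - by rewrite det_mulmx det_inv HdMF mulfV // gt_eqF.
  - exists (bvec rho l1 l3 kap v1 v3), (mvec rho l1 l3 kap v1 v3); by rewrite HMk.
  - by rewrite -mulmxA HiF mulmx1 addrC addKr.
exists ((1%:M + P *m Nk l1 l3 r1 r3 1 *m P^T) *m invmx F).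
exists ((1%:M + P *m Nk l1 l3 r1 r3 (-1) *m P^T) *m invmx F).
have k1 : (1 : R) ^+ 2 = 1 by rewrite expr1n.
have km1 : (-1 : R) ^+ 2 = 1 by rewrite sqrrN expr1n.
rewrite /Mp /Mm !HMk //.
split; first exact: Hex.
split; first exact: Hex.
split.
  case=> _ H.
  have := congr1 (fun Z => (P^T *m Z *m P) i0 i2) H.
  rewrite !mulmxA !HPP !mul1mx -!mulmxA !HPP !mulmx1 /Nk !mxE /=.
  have ln : l1 + l3 != 0 by rewrite gt_eqF //; lra.
  have : 0 < (l1 + l3)^-1 * l3 * r1 * r3.
    by rewrite !mulr_gt0 // ?invr_gt0; lra.
  move=> Hp; rewrite !mul1r !mulN1r; nra.
move=> Q M [[HQt HQd] [[b [m HM]] HQF]].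
have H1M : 1%:M + M = Q *m F by rewrite -HQF addrC subrK.
have HMC : (1%:M + M)^T *m (1%:M + M) = C.
  by rewrite H1M trmx_mul mulmxA -(mulmxA F^T) HQt mulmx1.
have HdM : 0 < \det (1%:M + M) by rewrite H1M det_mulmx HQd mul1r.
have HPMP : P^T *m M *m P = tens (P^T *m b) (P^T *m m) by rewrite tensP trmxK HM.
have [kap [Hk HN]] : exists kap : R, (kap = 1 \/ kap = -1) /\
    tens (P^T *m b) (P^T *m m) = Nk l1 l3 r1 r3 kap.
  apply: CUm => //.
  - by rewrite -HPMP -conjP // HMC HPCP.
  - rewrite -HPMP.
    have -> : 1%:M + P^T *m M *m P = P^T *m (1%:M + M) *m P.
      by rewrite mulmxDr mulmxDl mulmx1 HPP.
    by rewrite det_conj.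
have HMe : M = P *m Nk l1 l3 r1 r3 kap *m P^T.
  rewrite -HN -HPMP !mulmxA HPPt mul1mx -mulmxA HPPt mulmx1 //.
have HQe : Q = (1%:M + M) *m invmx F by rewrite H1M -mulmxA HFi mulmx1.
case: Hk => Hk; [left|right]; by rewrite HQe HMe Hk.
Qed.
End M1.

Lemma sq_bound (R : realFieldType) (S D T : R) : 0 <= S -> S ^+ 2 = D -> T ^+ 2 <= D -> T <= S.
Proof.
move=> S0 HS HT.
case: (lerP T 0) => hT; first lra.
rewrite -HS in HT.
by rewrite -(ler_pXn2r (n:=2)) // ?nnegrE //; lra.
Qed.
Arguments sq_bound {R S D T}.

Unset Implicit Arguments.

Theorem corollary2 (R : realType) (U Rh : 'M[R]_3) (e a n : 'cV[R]_3) :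
  sym_posdef U ->
  dotv e e = 1 ->
  SO3 Rh ->
  a != 0 -> n != 0 ->
  Rh *m ((- 1%:M + 2%:R *: tens e e) *m U *m (- 1%:M + 2%:R *: tens e e))
    = U + tens a n ->
  (* CC1 *) middle_eig_one U ->
  (* CC2 *) dotv a (U *m cofm (U ^+ 2 - 1%:M) *m n) = 0 ->
  (* CC3 *) 0 <= \tr (U ^+ 2) - \det (U ^+ 2) - dotv a a * dotv n n / 4%:R - 2%:R ->
  forall f : R, 0 <= f <= 1 ->
  (* C_f has middle eigenvalue 1, the others being lambda1^2 <= 1 <= lambda3^2 *)
  (exists l1 l3 : R, 0 < l1 /\ 0 < l3 /\ l1 ^+ 2 <= 1 <= l3 ^+ 2 /\
     char_poly (Cf U a n f)
       = ('X - (l1 ^+ 2)%:P) * ('X - 1) * ('X - (l3 ^+ 2)%:P)) /\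
  (forall (l1 l3 : R) (v1 v3 : 'cV[R]_3) (rho : R),
     0 < l1 -> 0 < l3 -> l1 ^+ 2 <= 1 <= l3 ^+ 2 ->
     char_poly (Cf U a n f)
       = ('X - (l1 ^+ 2)%:P) * ('X - 1) * ('X - (l3 ^+ 2)%:P) ->
     dotv v1 v1 = 1 -> dotv v3 v3 = 1 -> dotv v1 v3 = 0 ->
     Cf U a n f *m v1 = (l1 ^+ 2) *: v1 ->
     Cf U a n f *m v3 = (l3 ^+ 2) *: v3 ->
     rho != 0 ->
     f != 2%:R^-1 ->
     let F := f *: (U + tens a n) + (1 - f) *: U in
     let Mp := tens (bvec rho l1 l3 1 v1 v3) (mvec rho l1 l3 1 v1 v3) in
     let Mm := tens (bvec rho l1 l3 (-1) v1 v3) (mvec rho l1 l3 (-1) v1 v3) in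
     exists Qp Qm : 'M[R]_3,
       is_sol F Qp Mp /\ is_sol F Qm Mm /\ (Qp, Mp) <> (Qm, Mm) /\
       forall Q M : 'M[R]_3, is_sol F Q M -> (Q, M) = (Qp, Mp) \/ (Q, M) = (Qm, Mm)).
Proof.
move=> Hpd He HRh an nn HRU CC1 CC2 CC3 f Hf.
have [HUt HUp] := Hpd.
have [HRt HRd] := HRh.
set Q := - 1%:M + 2%:R *: tens e e in HRU.
have HQQ : Q *m Q = 1%:M := Qsq He.
have HQt : Q^T = Q := Qtr e.
have [mu1 [mu3 [Hmu Hchar]]] := CC1.
have [trU s2U dU] := charC Hchar.
have mu1p : 0 < mu1.
  apply: (posdef_eig Hpd); by rewrite Hchar !rootM root_XsubC eqxx.
have dUp : 0 < \det U by rewrite dU; apply: mulr_gt0 => //; case/andP: Hmu; lra.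
have dU1 : \det (1%:M - U) = 0 by rewrite det1m trU s2U dU; ring.
have dQ2 : \det Q * \det Q = 1 by rewrite -det_mulmx HQQ det1.
have dF1 : \det (U + tens a n) = \det U.
  rewrite -HRU det_mulmx HRd mul1r !det_mulmx.
  have -> : \det Q * \det U * \det Q = \det U * (\det Q * \det Q) by ring.
  by rewrite dQ2 mulr1.
have kk : dotv n (\adj U *m a) = 0.
  have := det_rank1 U a n 1; rewrite scale1r dF1 mul1r => H; lra.
have kk' : dotv a (\adj U *m n) = 0 by rewrite dotv_tr trmx_adj HUt.
have dFg : forall g, \det (U + g *: tens a n) = \det U.
  by move=> g; rewrite det_rank1 kk mulr0 addr0.
have dFg' : forall g, \det (U + g *: tens n a) = \det U.
  by move=> g; rewrite det_rank1 kk' mulr0 addr0.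
have dC : \det (Cf U a n f) = \det U ^+ 2 by rewrite /Cf det_mulmx dFg dFg' expr2.
have HC1 : Cf U a n 1 = Q *m (U *m U) *m Q.
  have -> : Cf U a n 1 = (U + tens a n)^T *m (U + tens a n).
    by rewrite /Cf !scale1r; congr (_ *m _); rewrite linearD /= tens_tr HUt.
  rewrite -HRU trmx_mul mulmxA -(mulmxA _ Rh^T) HRt mulmx1 !trmx_mul HQt HUt.
  by rewrite -!mulmxA (mulmxA Q Q) HQQ mul1mx !mulmxA.
have trC1 : \tr (Cf U a n 1) = \tr (U *m U).
  by rewrite HC1 mxtrace_mulC mulmxA HQQ mul1mx.
set AN := dotv a a * dotv n n.
have Hs : dotv n (U *m a) + dotv a (U *m n) = - AN.
  move: trC1; rewrite trCf expr1n !mul1r => H; rewrite /AN; lra.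
have trC : \tr (Cf U a n f) = \tr (U *m U) - f * (1 - f) * AN.
  rewrite trCf Hs /AN; ring.
set G := U *m U - 1%:M.
have Gt : G^T = G by rewrite /G linearB /= trmx1 trmx_mul HUt.
have dG : \det G = 0.
  have -> : G = (U - 1%:M) *m (U + 1%:M).
    by rewrite /G mulmxDr mulmxBl mulmx1 mul1mx addrA subrK.
  rewrite det_mulmx.
  have -> : U - 1%:M = - (1%:M - U) by rewrite opprB.
  by rewrite detN3 dU1 oppr0 mul0r.
have CC2' : dotv a (U *m \adj G *m n) = 0.
  by move: CC2; rewrite /cofm expr2 -mulmxE -/G trmx_adj Gt.
have HL : dotv (U *m a) (\adj G *m n) + dotv n (\adj G *m (U *m a)) = 0.
  have H1 : dotv (U *m a) (\adj G *m n) = 0.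
    by rewrite dotvC dotv_tr HUt mulmxA.
  by rewrite H1 add0r dotv_tr trmx_adj Gt.
have dCm1 : \det (Cf U a n f - 1%:M) = 0.
  rewrite (Cf_sub1 _ _ _ HUt) det_quad HL dG mulr0 !add0r !subr0 -/G.
  have -> : G + (tens n (U *m a) + tens (U *m a) n) + dotv a a *: tens n n
      = Cf U a n 1 - 1%:M.
    by rewrite (Cf_sub1 _ _ _ HUt) scale1r expr1n mul1r.
  rewrite HC1.
  have -> : Q *m (U *m U) *m Q - 1%:M = Q *m G *m Q.
    by rewrite /G mulmxBr mulmxBl mulmx1 HQQ.
  by rewrite !det_mulmx dG mulr0 mul0r mulr0.
have dC1 : \det (1%:M - Cf U a n f) = 0.
  by rewrite -opprB detN3 dCm1 oppr0.
set t := \tr (Cf U a n f).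
set d := \det (Cf U a n f).
have Hs2 : s2 (Cf U a n f) = t - 1 + d.
  by move: dC1; rewrite det1m -/t -/d => H; lra.
have AN0 : 0 <= AN by apply: mulr_ge0; apply: dotv_ge0.
have CC3' : 0 <= \tr (U *m U) - \det U ^+ 2 - AN / 4 - 2.
  by move: CC3; rewrite expr2 -mulmxE det_mulmx -expr2.
have f0 : 0 <= f by case/andP: Hf.
have f1 : f <= 1 by case/andP: Hf.
have Hh : t - d - 2 = \tr (U *m U) - \det U ^+ 2 - 2 - f * (1 - f) * AN.
  by rewrite /t /d trC dC; ring.
have Hh0 : AN / 4 - f * (1 - f) * AN = AN * (f - 2^-1) ^+ 2 by field; try done.
have hge : 0 <= t - d - 2.
  have := mulr_ge0 AN0 (sqr_ge0 (f - 2^-1)); rewrite -Hh0 Hh; lra.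
split.
  have dp : 0 < d by rewrite /d dC exprn_gt0.
  set disc := (t - 1) ^+ 2 - 4 * d.
  have discge : (t - 3) ^+ 2 <= disc by rewrite /disc; nra.
  have disc0 : 0 <= disc by apply: le_trans discge; apply: sqr_ge0.
  set sq := Num.sqrt disc.
  have sq0 : 0 <= sq := sqrtr_ge0 disc.
  have sq2 : sq ^+ 2 = disc by rewrite sqr_sqrtr.
  have sqa : t - 3 <= sq := sq_bound sq0 sq2 discge.
  have sqb : 3 - t <= sq.
    apply: (sq_bound sq0 sq2); have -> : (3 - t) ^+ 2 = (t - 3) ^+ 2 by ring.
    exact: discge.
  set x := ((t - 1) - sq) / 2.
  set y := ((t - 1) + sq) / 2.
  have x1 : x <= 1 by rewrite /x; lra.
  have y1 : 1 <= y by rewrite /y; lra.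
  have xy : x * y = d.
    rewrite /x /y.
    have -> : (t - 1 - sq) / 2 * ((t - 1 + sq) / 2) = ((t - 1) ^+ 2 - sq ^+ 2) / 4 by field; try done.
    rewrite sq2 /disc; field; try done.
  have y0 : 0 < y by lra.
  have x0 : 0 < x by rewrite -(pmulr_lgt0 x y0) xy.
  exists (Num.sqrt x), (Num.sqrt y).
  have Hx2 : Num.sqrt x ^+ 2 = x by rewrite sqr_sqrtr // ltW.
  have Hy2 : Num.sqrt y ^+ 2 = y by rewrite sqr_sqrtr // ltW.
  split; first by rewrite sqrtr_gt0.
  split; first by rewrite sqrtr_gt0.
  rewrite Hx2 Hy2 x1 y1; split => //.
  apply: charC_back.
  - rewrite -/t /x /y; field; try done.
  - rewrite Hs2 xy /x /y; field; try done.
  - by rewrite -/d xy.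
move=> l1 l3 v1 v3 rho l1p l3p /andP [Hl1 Hl3] Hchar2 H1 H3 H13 Hv1 Hv3 rn fh F Mp Mm.
have [tr2 s22 d2] := charC Hchar2.
have ANp : 0 < AN by apply: mulr_gt0; apply: dotv_gt0.
have fp : 0 < (f - 2^-1) ^+ 2.
  rewrite lt_neqAle sqr_ge0 andbT eq_sym sqrf_eq0 subr_eq0; exact: fh.
have hgt : 0 < t - d - 2.
  have := mulr_gt0 ANp fp; rewrite -Hh0 Hh; lra.
have hl : (1 - l1 ^+ 2) * (l3 ^+ 2 - 1) > 0.
  by move: hgt; rewrite /t /d tr2 d2 => H; nra.
have l1l : l1 < 1.
  have : l1 ^+ 2 < 1 by nra.
  nra.
have l3g : 1 < l3.
  have : 1 < l3 ^+ 2 by nra.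
  nra.
have HF : F = U + f *: tens a n.
  by apply/matrixP => i j; rewrite /F !mxE; ring.
have HFt : F^T *m F = Cf U a n f.
  by rewrite HF /Cf; congr (_ *m _); rewrite linearD /= linearZ /= tens_tr HUt.
have dFp : 0 < \det F by rewrite HF dFg.
apply: BJ => //; rewrite HFt //.
Qed.
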